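(* Let $q$ be a prime power and $\ell$ an odd prime dividing $q-1$. For an integer $n \ge 1$ let $N_q(n)$ denote the number of monic irreducible polynomials of degree $n$ in $\mathbb{F}_q[x]$. Then for every integer $t \ge 0$, $v_\ell(N_q(2^t\ell)) = v_\ell(q-1) - 1$.
   Context: For a prime $\ell$ and nonzero integer $n$, $v_\ell(n)$ is the exponent of the highest power of $\ell$ dividing $n$. *)

(* Defs.v *)
From HB Require Import structures.
From mathcomp Require Import all_boot all_order all_algebra all_field.
From mathcomp Require Import boolp.
Set Implicit Arguments. Unset Strict Implicit. Unset Printing Implicit Defensive.
Import GRing.Theory.
Local Open Scope ring_scope.

(* The monic polynomial of degree n whose lower coefficients are given by t:
   x^n + t_{n-1} x^{n-1} + ... + t_0.  Every monic polynomial of degree n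
   arises from exactly one such tuple. *)
Definition monic_of_tuple (F : finFieldType) (n : nat) (t : n.-tuple F)
  : {poly F} := 'X^n + \poly_(i < n) t`_i.

(* N_q(n): number of monic irreducible polynomials of degree n over F,
   where q = #|F|.  Irreducibility (a Prop in mathcomp) is turned into a
   boolean classically via boolp's asbool. *)
Definition Nirr (F : finFieldType) (n : nat) : nat :=
  #|[set t : n.-tuple F | `[< irreducible_poly (monic_of_tuple t) >] ]|.

(* Main.v *)
Require Import Defs.
From HB Require Import structures.
From mathcomp Require Import all_boot all_order all_algebra all_field.
From mathcomp Require Import zify ring.
From mathcomp Require Import boolp.
Set Implicit Arguments. Unset Strict Implicit. Unset Printing Implicit Defensive.

Module PolyPart.
Import GRing.Theory.
Import Pdiv.CommonRing Pdiv.RingMonic Pdiv.Field.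
Local Open Scope ring_scope.

Section PowMorph.
Variables (R : comNzRingType) (k : nat) (Hk : [pchar R].-nat k).
Definition powk (x : R) := x ^+ k.
Lemma powk_nmod : nmod_morphism powk.
Proof.
split=> [|x y]; rewrite /powk; last exact: exprDn_pchar.
by rewrite expr0n; case/andP: Hk; case: k.
Qed.
Lemma powk_monoid : monoid_morphism powk.
Proof. by split=> [|x y]; rewrite /powk ?expr1n // exprMn. Qed.
HB.instance Definition _ := GRing.isNmodMorphism.Build R R powk powk_nmod.
HB.instance Definition _ := GRing.isMonoidMorphism.Build R R powk powk_monoid.
Definition powkM : {rmorphism R -> R} := powk.
End PowMorph.

Section SA.
Variables (F : finFieldType) (h : {poly F}) (hI : monic_irreducible_poly h).
Let K : finFieldType := {poly %/ h with hI}.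
Let x : K := in_qpoly h 'X.

Lemma dvdp_in_qpoly (g : {poly F}) : (h %| g) = (in_qpoly h g == 0 :> K).
Proof.
rewrite dvdpE /rdvdp; apply/eqP/eqP => H.
  by apply: val_inj; rewrite /= mk_monicE.
by have := congr1 val H; rewrite /= mk_monicE.
Qed.

Lemma in_qpoly_horner (g : {poly F}) : in_qpoly h g = (map_poly (qpolyC h) g).[x] :> K.
Proof. by rewrite -in_qpoly_comp_horner comp_polyXr. Qed.

Lemma pnat_card : [pchar F].-nat #|F|.
Proof.
have [p pr pc] := finPcharP F.
rewrite (eq_pnat _ (pcharf_eq pc)).
have -> : #|F| = (p ^ logn p #|F|)%N by exact: (card_pprimeChar pc).
by rewrite pnatX pnat_id.
Qed.

Lemma expf_cardX (R : finFieldType) (c : R) m : c ^+ (#|R| ^ m)%N = c.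
Proof. by elim: m => [|m IH]; rewrite ?expr1 // expnS exprM expf_card IH. Qed.

Lemma fix_all m : x ^+ (#|F| ^ m)%N = x -> forall y : K, y ^+ (#|F| ^ m)%N = y.
Proof.
move=> Hx y.
have Hk : [pchar K].-nat (#|F| ^ m)%N.
  by rewrite (eq_pnat _ (pchar_qpoly h)) pnatX pnat_card.
have Hy : y = in_qpoly h y :> K.
  by apply: val_inj; rewrite /= rmodp_small // size_mk_monic.
rewrite Hy in_qpoly_horner.
set P := map_poly (qpolyC h) y.
have E := horner_map (powkM Hk) P x.
transitivity (powkM Hk P.[x]); first by [].
have Ex : powkM Hk x = x by rewrite /= /powk Hx.
rewrite -E Ex /P -map_poly_comp; congr (_.[x]).
apply: eq_map_poly => c /=; rewrite /powk -rmorphXn /=. 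
by rewrite expf_cardX.
Qed.

Lemma size_XnsubX (R : nzRingType) (N : nat) : (1 < N)%N -> size ('X^N - 'X : {poly R}) = N.+1.
Proof. by move=> HN; rewrite size_polyDl ?size_polyXn // size_polyN size_polyX. Qed.

Lemma cardF_gt1 : (1 < #|F|)%N.
Proof. exact: finNzRing_gt1. Qed.

Lemma dvd_XqnX n : (0 < n)%N -> (h %| 'X^(#|F| ^ n)%N - 'X) = ((size h).-1 %| n)%N.
Proof.
move=> n_gt0.
set q := #|F|; set d := (size h).-1.
have cK : #|K| = (q ^ d)%N by exact: card_qfpoly.
have d_gt0 : (0 < d)%N.
  by case: hI => [[sh _] _]; rewrite /d -ltnS prednK // (ltn_trans _ sh).
have q_gt1 : (1 < q)%N := cardF_gt1.
have PM : forall a c, (forall y : K, y ^+ (q ^ a)%N = y) -> forall y : K, y ^+ (q ^ (a * c))%N = y.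
  move=> a c Pa y; elim: c => [|c IH]; first by rewrite muln0 expr1.
  by rewrite mulnS expnD exprM Pa IH.
have Pd : forall y : K, y ^+ (q ^ d)%N = y by move=> y; rewrite -cK expf_card.
rewrite dvdp_in_qpoly rmorphB /= rmorphXn /= subr_eq0 -/x.
apply/eqP/idP => [Hx|/dvdnP [k ->]]; last by rewrite mulnC PM.
have Pn := fix_all Hx.
have [km kn Hb _] := egcdnP d n_gt0.
set g := gcdn n d in Hb.
have Pg : forall y : K, y ^+ (q ^ g)%N = y.
  move=> y.
  have := PM _ km Pn y; rewrite (mulnC n) Hb expnD exprM.
  by rewrite (mulnC kn) PM.
have g_gt0 : (0 < g)%N by rewrite gcdn_gt0 n_gt0.
have qg : (1 < q ^ g)%N by rewrite -{1}(expn0 q) ltn_exp2l.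
have : (size (enum K) < size (('X^(q ^ g)%N - 'X : {poly K}))%R)%N.
  apply: max_poly_roots; last exact: enum_uniq.
    by rewrite -size_poly_eq0 size_XnsubX.
  by apply/allP => y _; rewrite rootE !hornerE Pg subrr.
rewrite -cardE cK size_XnsubX //.
rewrite ltnS leq_exp2l // => dg.
apply/gcdn_idPr; apply/eqP; rewrite eqn_leq dg andbT.
by apply: dvdn_leq => //; exact: dvdn_gcdr.
Qed.
End SA.

Section B.
Variable F : finFieldType.

Lemma irreducibleb_scale (p : {poly F}) c : c != 0 -> irreducibleb p -> irreducibleb (c *: p).
Proof.
move=> c0 /irreducibleP [sp Hp]; apply/irreducibleP; split; first by rewrite size_scale.
move=> r sr; rewrite dvdpZr // => /(Hp _ sr) rp.
by apply: eqp_trans rp _; rewrite eqp_sym eqp_scale.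
Qed.

Lemma irr_factor (p : {poly F}) : (1 < size p)%N ->
  exists2 r : {poly F}, (r \is monic) && irreducibleb r & r %| p.
Proof.
have [m] := ubnP (size p); elim: m p => // m IH p sm sp.
case: (boolP (irreducibleb p)) => Hp.
  have lc0 : lead_coef p != 0 by rewrite lead_coef_eq0 -size_poly_gt0 (ltn_trans _ sp).
  exists ((lead_coef p)^-1 *: p); last by rewrite dvdpZl // invr_eq0.
  rewrite irreducibleb_scale ?invr_eq0 // andbT.
  by apply/monicP; rewrite lead_coefZ mulVf.
move: Hp; rewrite /irreducibleb sp /= negb_forall => /existsP [r].
rewrite negb_imply -ltnNge => /andP [rdr sr].
have := size_npoly r => srp.
have srm : (size r < m)%N.
  apply: (leq_ltn_trans srp); move: sm sp; case: (size p) => [|k] //=; lia.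
have [r' Hr' r'r] := IH r srm sr.
exists r' => //; apply: dvdp_trans r'r _; by rewrite dvdpE.
Qed.

Lemma cardF_natr : (#|F|%:R : F) = 0.
Proof.
have [p pr pc] := finPcharP F.
have cF : #|F| = (p ^ logn p #|F|)%N by exact: (card_pprimeChar pc).
move: cF; case E: (logn p #|F|) => [|k] cF.
  by have := finNzRing_gt1 F; rewrite cF.
by rewrite cF natrX exprS pcharf0 // mul0r.
Qed.


Definition mirr (s : {poly F}) := (s \is monic) && irreducibleb s.

Lemma coprime_mirr a b : mirr a -> mirr b -> a != b -> coprimep a b.
Proof.
case/andP => ma /irreducibleP ia; case/andP => mb /irreducibleP ib ab.
rewrite irreducible_poly_coprime //; apply/negP => /(apply_irredp ib) H.
have : a %= b by apply: H; case: ia => sa _; rewrite neq_ltn sa orbT.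
by rewrite eqp_monic // (negPf ab).
Qed.

Lemma coprime_prod a ss : mirr a -> a \notin ss -> all mirr ss -> coprimep a (\prod_(s <- ss) s).
Proof.
move=> ma; elim: ss => [|b ss IH]; first by rewrite big_nil coprimep1.
rewrite in_cons negb_or => /andP [ab anss] /= /andP [mb mss].
by rewrite big_cons coprimepMr coprime_mirr ?IH.
Qed.

Lemma prod_dvd (ss : seq {poly F}) (Q : {poly F}) : uniq ss -> all mirr ss ->
  (forall s, s \in ss -> s %| Q) -> \prod_(s <- ss) s %| Q.
Proof.
elim: ss => [|a ss IH]; first by rewrite big_nil dvd1p.
move=> /= /andP [ass uss] /andP [ma mss] H.
rewrite big_cons Gauss_dvdp ?coprime_prod // H ?mem_head //=.
by apply: IH => // s sin; apply: H; rewrite in_cons sin orbT.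
Qed.

Variables (n : nat) (n_gt0 : (0 < n)%N).
Let N := (#|F| ^ n)%N.
Let P : {poly F} := 'X^N - 'X.

Lemma N_gt1 : (1 < N)%N.
Proof. by rewrite /N -{1}(expn0 #|F|) ltn_exp2l // finNzRing_gt1. Qed.

Lemma size_P : size P = N.+1.
Proof. by rewrite size_polyDl ?size_polyXn // size_polyN size_polyX ltnS N_gt1. Qed.

Lemma P_neq0 : P != 0.
Proof. by rewrite -size_poly_eq0 size_P. Qed.

Lemma P_monic : P \is monic.
Proof.
apply/monicP; rewrite /P lead_coefDl ?lead_coefXn //.
by rewrite size_polyXn size_polyN size_polyX ltnS N_gt1.
Qed.

Lemma P_sqfree (r : {poly F}) : (1 < size r)%N -> ~~ (r * r %| P).
Proof.
move=> sr; apply/negP => /dvdpP [s Hs].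
have : r %| P^`().
  rewrite Hs !derivM; apply: dvdp_add.
    by apply: dvdp_mull; apply: dvdp_mulr.
  apply: dvdp_mull; apply: dvdp_add; first exact: dvdp_mull.
  exact: dvdp_mulr.
have -> : P^`() = -1.
  rewrite /P derivB derivXn derivX /N -mulr_natr -polyC_natr natrX cardF_natr.
  by rewrite expr0n gtn_eqF // polyC0 mulr0 sub0r.
rewrite dvdpNr dvdp1 => /eqP sr1; by rewrite sr1 in sr.
Qed.

Lemma size_prod_pred (I : finType) (A : pred I) (G : I -> {poly F}) :
  (forall i, A i -> G i != 0) ->
  size (\prod_(i | A i) G i) = (\sum_(i | A i) (size (G i)).-1).+1.
Proof.
move=> nzG; elim/big_rec2: _ => [|i d p /nzG nzGi IHp]; first by rewrite size_poly1.
by rewrite size_mul // -?size_poly_eq0 IHp // addnS polySpred.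
Qed.

Definition T := {poly_(N.+1) F}.
Definition Sset : {set T} := [set s : T | mirr s && (val s %| P)].

Lemma S_prod : \prod_(s in Sset) val s = P.
Proof.
set Q := \prod_(s in Sset) val s.
have mQ : Q \is monic by apply: monic_prod => s; rewrite inE => /andP [/andP [] ].
have QP : Q %| P.
  rewrite /Q -big_enum -(big_map val xpredT id); apply: prod_dvd.
  - by rewrite map_inj_uniq ?enum_uniq //; exact: val_inj.
  - by apply/allP => s /mapP [t]; rewrite mem_enum inE => /andP [? _] ->.
  - by move=> s /mapP [t]; rewrite mem_enum inE => /andP [_ ?] ->.
set R := P %/ Q.
have PRQ : P = R * Q by rewrite divpK.
have R0 : R != 0 by apply: contraNneq P_neq0 => R0; rewrite PRQ R0 mul0r.
have sR : (size R <= 1)%N.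
  rewrite leqNgt; apply/negP => /irr_factor [r mr rR].
  have rP : r %| P by rewrite PRQ dvdp_mulr.
  have srN : (size r <= N.+1)%N by rewrite -size_P dvdp_leq // P_neq0.
  pose r' : T := npolyp N.+1 r.
  have r'r : val r' = r by rewrite /= npolypK.
  have r'r2 : (r' : {poly F}) = r := r'r.
  have rpS : r' \in Sset by rewrite inE r'r2 r'r rP andbT.
  have rQ : r %| Q by rewrite /Q (bigD1 r') //= r'r dvdp_mulr.
  have : r * r %| P by rewrite PRQ dvdp_mul.
  apply/negP; apply: P_sqfree.
  by case/andP: mr => _ /irreducibleP [].
have lR : lead_coef R = 1.
  have := congr1 lead_coef PRQ.
  by rewrite lead_coefM (monicP mQ) (monicP P_monic) mulr1.
have R1 : R = 1.
  by move: lR; rewrite (size1_polyC sR) lead_coefC => ->.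
by rewrite PRQ R1 mul1r.
Qed.

Lemma sum_S : (\sum_(s in Sset) (size (val s)).-1)%N = N.
Proof.
have := congr1 (fun p : {poly F} => size p) S_prod; rewrite /=; rewrite size_P size_prod_pred => [[] //|s].
by rewrite inE => /andP [/andP [/monic_neq0 ? _] _].
Qed.
End B.

Section C.
Variable F : finFieldType.

Lemma coef_mot d (t : d.-tuple F) i :
  (monic_of_tuple t)`_i = if (i < d)%N then t`_i else (i == d)%:R.
Proof.
rewrite /monic_of_tuple coefD coefXn coef_poly.
case: ltnP => id; first by rewrite (ltn_eqF id) add0r.
by rewrite addr0.
Qed.

Lemma size_mot d (t : d.-tuple F) : size (monic_of_tuple t) = d.+1.
Proof.
rewrite /monic_of_tuple size_polyDl ?size_polyXn //.
by rewrite ltnS size_poly.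
Qed.

Lemma monic_mot d (t : d.-tuple F) : monic_of_tuple t \is monic.
Proof.
by apply/monicP; rewrite /lead_coef size_mot /= coef_mot ltnn eqxx.
Qed.

Lemma mot_inj d : injective (@monic_of_tuple F d).
Proof.
move=> t1 t2 E; apply: eq_from_tnth => i.
have := congr1 (fun p : {poly F} => p`_i) E; rewrite /= !coef_mot ltn_ord.
by rewrite !(tnth_nth 0).
Qed.

Lemma mot_surj d (s : {poly F}) : s \is monic -> size s = d.+1 ->
  monic_of_tuple [tuple s`_i | i < d] = s.
Proof.
move=> ms ss; apply/polyP => i; rewrite coef_mot.
case: ltnP => id.
  by rewrite (nth_map (Ordinal id)) ?size_enum_ord // nth_enum_ord.
have [->|ne] := eqVneq i d.
  by have := monicP ms; rewrite /lead_coef ss.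
rewrite nth_default // ss; lia.
Qed.
End C.

Section D.
Variables (F : finFieldType) (n : nat) (n_gt0 : (0 < n)%N).
Let N := (#|F| ^ n)%N.

Lemma card_deg d : (0 < d)%N -> (d <= N)%N ->
  #|[pred s : T F n | (s \in Sset F n) && ((size (val s)).-1 == d)]|
  = if (d %| n)%N then Nirr F d else 0%N.
Proof.
move=> d_gt0 dN.
case: ifP => dn; last first.
  apply: eq_card0 => s; rewrite inE; apply/negP => /andP [sS /eqP sd].
  rewrite inE in sS; case/andP: sS => /andP [ms /irreducibleP irs] sP.
  have := dvd_XqnX (irs, ms) n_gt0.
  by rewrite sP /= sd dn.
pose phi (t : d.-tuple F) : T F n := npolyp N.+1 (monic_of_tuple t).
have phiK t : val (phi t) = monic_of_tuple t.
  by rewrite /phi /= npolypK // size_mot ltnS.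
have inj : injective phi.
  by move=> t1 t2 E; apply: mot_inj; rewrite -!phiK E.
rewrite /Nirr -(card_imset _ inj); apply: eq_card => s; rewrite inE.
apply/andP/imsetP.
  case => sS /eqP sd; rewrite inE in sS; case/andP: sS => /andP [ms irs] sP.
  have ss : size (val s) = d.+1.
    by rewrite -sd prednK // size_poly_gt0 monic_neq0.
  have E := mot_surj ms ss.
  exists [tuple (val s)`_i | i < d].
    by rewrite inE; apply/asboolP; rewrite E; exact/irreducibleP.
  by apply: val_inj; rewrite phiK E.
case => t; rewrite inE => /asboolP irt ->.
have hI : monic_irreducible_poly (monic_of_tuple t) := (irt, monic_mot t).
split; last by rewrite phiK size_mot.
rewrite inE; apply/andP; split.
  by rewrite /mirr phiK monic_mot; apply/irreducibleP.
by rewrite phiK (dvd_XqnX hI n_gt0) size_mot.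
Qed.

Lemma predlt a b : (a <= b.+1)%N -> (a.-1 < b.+1)%N.
Proof. by case: a => [|a] /=; lia. Qed.

Lemma szT (s : T F n) : ((size (val s)).-1 < N.+1)%N.
Proof. exact: predlt (size_npoly s). Qed.

Lemma gauss_sum : (#|F| ^ n)%N = (\sum_(d < n.+1 | (d %| n)%N) d * Nirr F d)%N.
Proof.
rewrite -(sum_S F n_gt0) -/N.
rewrite (partition_big (fun s : T F n => (inord (size (val s)).-1 : 'I_N.+1)) xpredT) //=.
have nN : (n.+1 <= N.+1)%N by rewrite ltnS /N ltnW // ltn_expl // finNzRing_gt1.
rewrite (big_ord_widen_cond N.+1 (fun d => d %| n)%N (fun d => d * Nirr F d)%N nN) [in RHS]big_mkcond /=.
apply: eq_bigr => j _.
have -> : (\sum_(s in Sset F n | inord (size (val s)).-1 == j) (size (val s)).-1 =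
     \sum_(s in [pred s : T F n | (s \in Sset F n) && ((size (val s)).-1 == j)]) j)%N.
  apply: eq_big => s.
    rewrite [in RHS]inE; congr (_ && _).
    by rewrite -val_eqE /= inordK // szT.
  by move=> /andP [_ /eqP <-]; rewrite inordK // szT.
rewrite sum_nat_const.
have [->|j0] := eqVneq (val j) 0%N; first by rewrite muln0 dvd0n gtn_eqF.
have jN : (j <= N)%N by rewrite -ltnS ltn_ord.
rewrite card_deg ?lt0n //.
case: ifP => jn; last by rewrite mul0n.
by rewrite mulnC /= ltnS (dvdn_leq n_gt0 jn).
Qed.
End D.

End PolyPart.
Import PolyPart.

Module NatPart.

Lemma cong1X p a k : 0 < a -> p %| a - 1 -> p %| a ^ k - 1.
Proof. by move=> a0 pa; rewrite !subn1 predn_exp dvdn_mulr // -subn1. Qed.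

Lemma modX1 p a k : 0 < a -> p %| a - 1 -> a ^ k %% p = 1 %% p.
Proof.
move=> a0 pa; have := cong1X k a0 pa.
rewrite -eqn_mod_dvd ?expn_gt0 ?a0 // => /eqP //.
Qed.

Lemma geom_mod p a k : 0 < a -> p %| a - 1 -> (\sum_(i < k) a ^ i) %% p = k %% p.
Proof.
move=> a0 pa; elim: k => [|k IH]; first by rewrite big_ord0.
rewrite big_ord_recr /= -modnDm IH modX1 // modnDm addn1 //.
Qed.

Lemma logn_lte p a k : prime p -> 1 < a -> p %| a - 1 -> ~~ (p %| k) -> 0 < k ->
  logn p (a ^ k - 1) = logn p (a - 1).
Proof.
move=> pp a1 pa pk k0.
have a0 : 0 < a by lia.
rewrite !subn1 predn_exp lognM; first last.
- by case: k k0 pk => // k _ _; rewrite big_ord_recl expn0 add1n.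
- by lia.
rewrite [X in _ + X]logn_coprime ?addn0 // prime_coprime //.
apply: contra pk => H.
by move: H; rewrite /dvdn (geom_mod k a0 pa).
Qed.

Lemma notdvd_a l a : prime l -> l %| a - 1 -> 0 < a -> ~~ (l %| a).
Proof.
move=> pl la a0; apply/negP => H.
have : l %| (a - 1) + 1 by rewrite subnK.
by rewrite dvdn_addr // dvdn1 => /eqP l1; rewrite l1 in pl.
Qed.

Lemma l_ge3 l : prime l -> odd l -> 2 < l.
Proof.
move=> pl ol; have := prime_gt1 pl; rewrite leq_eqVlt => /orP [/eqP l2|//].
by rewrite -l2 in ol.
Qed.

Lemma alg_id (Y a w : nat) : 0 < a -> 0 < w ->
  Y + a * w + a ^ 2 = a * a * (w * w) + a -> Y = a * (w - 1) * (a * w + (a - 1)).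
Proof.
case: a => // a; case: w => // w _ _ E.
rewrite !subn1 /=.
apply: (@addIn (a.+1 * w.+1 + a.+1 ^ 2)); rewrite addnA E; ring.
Qed.

Lemma core (a l N c : nat) : prime l -> odd l -> l %| a - 1 -> 1 < a -> ~~ (l %| c) -> 0 < c ->
  c * l * N + a ^ l + a ^ 2 = a ^ (2 * l) + a -> logn l N = (logn l (a - 1)).-1.
Proof.
move=> pl ol la a1 lc c0 E.
have l3 := l_ge3 pl ol.
set w := a ^ l.-1.
have Ew : a ^ l = a * w by rewrite /w -expnS prednK // (ltn_trans _ l3).
have w2 : 1 < w by rewrite /w -(expn0 a) ltn_exp2l //; lia.
have E2 : a ^ (2 * l) = a * a * (w * w) by rewrite mulnC expnM Ew; lia.
rewrite Ew E2 in E.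
have EY : c * l * N = a * (w - 1) * (a * w + (a - 1)).
  apply: alg_id E; lia.
have a0 : 0 < a by lia.
have Y0 : 0 < a * (w - 1) * (a * w + (a - 1)).
  by rewrite !muln_gt0 a0 subn_gt0 w2 addn_gt0 muln_gt0 a0 (ltnW w2).
have N0 : 0 < N by move: Y0; rewrite -EY !muln_gt0 => /andP [_ ->].
have := congr1 (logn l) EY.
have l0 := prime_gt0 pl.
have w10 : 0 < w - 1 by rewrite subn_gt0.
have s0 : 0 < a * w + (a - 1) by rewrite addn_gt0 muln_gt0 a0 (ltnW w2).
have cl0 : 0 < c * l by rewrite muln_gt0 c0 l0.
have aw0 : 0 < a * (w - 1) by rewrite muln_gt0 a0 w10.
rewrite (lognM l cl0 N0) (lognM l c0 l0) (lognM l aw0 s0) (lognM l a0 w10).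
rewrite (logn_coprime (m := c)) ?prime_coprime //.
rewrite (logn_coprime (m := a)) ?prime_coprime ?notdvd_a //.
rewrite (logn_prime l pl) eqxx.
rewrite (logn_coprime (m := a * w + (a - 1))); last first.
  rewrite prime_coprime // dvdn_addl //.
  by rewrite Euclid_dvdM // negb_or notdvd_a //= /w Euclid_dvdX // negb_and notdvd_a.
rewrite /w logn_lte //; last by rewrite -subn1 subn_gt0 (ltn_trans _ l3).
  by rewrite !add0n addn0 => <-.
have lp : 0 < l.-1 by rewrite -subn1 subn_gt0 (ltn_trans _ l3).
by apply/negP => /(dvdn_leq lp); lia.
Qed.

Lemma core0 (a l N : nat) : prime l -> odd l -> l %| a - 1 -> 1 < a ->
  l * N + a = a ^ l -> logn l N = (logn l (a - 1)).-1.
Proof.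
move=> pl ol la a1 E.
have l3 := l_ge3 pl ol.
set w := a ^ l.-1.
have Ew : a ^ l = a * w by rewrite /w -expnS prednK // (ltn_trans _ l3).
have w2 : 1 < w by rewrite /w -(expn0 a) ltn_exp2l //; lia.
rewrite Ew in E.
have EY : l * N = a * (w - 1) by rewrite mulnBr muln1; lia.
have a0 : 0 < a by lia.
have Y0 : 0 < a * (w - 1) by rewrite muln_gt0 a0 subn_gt0 w2.
have N0 : 0 < N by move: Y0; rewrite -EY !muln_gt0 => /andP [_ ->].
have := congr1 (logn l) EY.
have l0 := prime_gt0 pl.
have w10 : 0 < w - 1 by rewrite subn_gt0.
rewrite (lognM l l0 N0) (lognM l a0 w10).
rewrite (logn_coprime (m := a)) ?prime_coprime ?notdvd_a //.
rewrite (logn_prime l pl) eqxx.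
rewrite /w logn_lte //; last by rewrite -subn1 subn_gt0 (ltn_trans _ l3).
  by rewrite !add0n => <-.
have lp : 0 < l.-1 by rewrite -subn1 subn_gt0 (ltn_trans _ l3).
by apply/negP => /(dvdn_leq lp); lia.
Qed.

Lemma sum_pred1 M (P : pred nat) (G : nat -> nat) a : a < M ->
  (forall d, P d = (d == a)) -> \sum_(d < M | P d) G d = G a.
Proof.
move=> aM HP; rewrite (bigD1 (Ordinal aM)) ?HP //= big1 ?addn0 // => i.
by rewrite HP -val_eqE /= => /andP [/eqP -> ]; rewrite eqxx.
Qed.

Lemma sum_pred2 M (P : pred nat) (G : nat -> nat) a b : a < M -> b < M -> a != b ->
  (forall d, P d = (d == a) || (d == b)) -> \sum_(d < M | P d) G d = G a + G b.
Proof.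
move=> aM bM ab HP; rewrite (bigD1 (Ordinal aM)) ?HP ?eqxx //=.
rewrite (bigD1 (Ordinal bM)) /=; last by rewrite HP eqxx orbT -val_eqE /= eq_sym.
rewrite big1 ?addn0 // => i; rewrite HP -!val_eqE /=.
by case/andP => /andP [/orP [] -> ].
Qed.

Lemma div_char s k d : odd k -> d %| 2 ^ s.+1 * k -> ~~ (d %| 2 ^ s * k) -> 2 ^ s.+1 %| d.
Proof.
move=> ok; elim: s d => [|s IH] d.
  move=> H1 H2; case: (boolP (odd d)) => od.
    by rewrite expn1 Gauss_dvdr ?coprimen2 // in H1; rewrite expn0 mul1n H1 in H2.
  by rewrite expn1 dvdn2.
move=> H1 H2; case: (boolP (odd d)) => od.
  rewrite Gauss_dvdr ?coprimeXr ?coprimen2 // in H1.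
  by rewrite dvdn_mull in H2.
have [d' Ed] : exists d', d = 2 * d'.
  by exists d./2; rewrite -[d in LHS]odd_double_half (negPf od) add0n -mul2n.
rewrite Ed expnS dvdn_pmul2l //; apply: IH.
  have : 2 * d' %| 2 * (2 ^ s.+1 * k) by rewrite -Ed mulnA -expnS.
  by rewrite dvdn_pmul2l.
by apply: contra H2 => H; rewrite Ed expnS -mulnA dvdn_pmul2l.
Qed.

Lemma div_split s k d : odd k ->
  (d %| 2 ^ s.+1 * k) && ~~ (d %| 2 ^ s * k) = (2 ^ s.+1 %| d) && (d %| 2 ^ s.+1 * k).
Proof.
move=> ok; apply/andP/andP => [[H1 H2]|[H1 H2]].
  by split => //; apply: div_char H2.
split => //; apply/negP => H3.
have := dvdn_trans H1 H3; rewrite expnS mulnC dvdn_pmul2l ?expn_gt0 //.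
by rewrite dvdn2 ok.
Qed.

Definition A (G : nat -> nat) m := \sum_(d < m.+1 | d %| m) G d.

Lemma A_split G m : 0 < m ->
  A G (2 * m) = A G m + \sum_(d < (2 * m).+1 | (d %| 2 * m) && ~~ (d %| m)) G d.
Proof.
move=> m0; rewrite /A (bigID (fun d : 'I_(2 * m).+1 => (d : nat) %| m)) /=; congr (_ + _).
have mm : m.+1 <= (2 * m).+1 by rewrite ltnS leq_pmull.
rewrite (big_ord_widen_cond _ (fun d => d %| m) G mm); apply: eq_big => // d.
case dm: (d %| m); last by rewrite andbF.
by rewrite dvdn_mull //= ltnS dvdn_leq.
Qed.

Lemma A_pow2 G s : A G (2 ^ s.+1) = A G (2 ^ s) + G (2 ^ s.+1).
Proof.
rewrite expnS A_split ?expn_gt0 //; congr (_ + _).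
rewrite -expnS; apply: (sum_pred1 (P := fun d => (d %| 2 ^ s.+1) && ~~ (d %| 2 ^ s))) => // d.
have := div_split s d (isT : odd 1); rewrite !muln1 => ->.
by rewrite andbC eqn_dvd.
Qed.

Lemma A_pow2l G s l : prime l -> odd l ->
  A G (2 ^ s.+1 * l) = A G (2 ^ s * l) + (G (2 ^ s.+1) + G (2 ^ s.+1 * l)).
Proof.
move=> pl ol.
have l0 := prime_gt0 pl; have l1 := prime_gt1 pl.
rewrite expnS -mulnA A_split ?muln_gt0 ?expn_gt0 ?l0 //; congr (_ + _).
rewrite mulnA -expnS.
apply: (sum_pred2 (P := fun d => (d %| 2 ^ s.+1 * l) && ~~ (d %| 2 ^ s * l))).
- by rewrite ltnS -{1}[2 ^ s.+1]muln1 leq_pmul2l ?expn_gt0.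
- by [].
- by rewrite neq_ltn ltn_Pmulr ?expn_gt0.
move=> d; rewrite div_split //.
apply/andP/orP => [[/dvdnP [e ->]]|[/eqP ->|/eqP ->]].
  rewrite mulnC dvdn_pmul2l ?expn_gt0 // => el.
  case/primeP: pl => _ /(_ e el) /orP [/eqP ->|/eqP ->]; first by left; rewrite muln1.
  by right.
  by rewrite dvdnn dvdn_mulr.
by rewrite dvdnn dvdn_mulr.
Qed.

Lemma A_l G l : prime l -> A G l = G 1 + G l.
Proof.
move=> pl; apply: (sum_pred2 (P := fun d => d %| l)) => //; first by rewrite ltnS prime_gt0.
  by rewrite neq_ltn prime_gt1.
move=> d; apply/idP/idP => [dl|/orP [/eqP ->|/eqP ->]]; last by rewrite dvdnn.
  by case/primeP: pl => _ /(_ d dl).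
by rewrite dvd1n.
Qed.

Lemma A_1 G : A G 1 = G 1.
Proof. by apply: (sum_pred1 (P := fun d => d %| 1)) => // d; rewrite dvdn1. Qed.

End NatPart.
Import NatPart.

Lemma not_dvd_pow2 l s : prime l -> odd l -> ~~ (l %| 2 ^ s).
Proof.
move=> pl ol; rewrite Euclid_dvdX //; apply/negP => /andP [l2 _].
have := dvdn_leq (isT : 0 < 2) l2; have := l_ge3 pl ol; lia.
Qed.

Theorem lemma5p2 (F : finFieldType) (l : nat) :
  prime l -> odd l -> (l %| #|F| - 1)%N ->
  forall t : nat,
    logn l (Nirr F (2 ^ t * l)) = (logn l (#|F| - 1)).-1.
Proof.
move=> pl ol lq t.
set q := #|F|.
have q1 : 1 < q := finNzRing_gt1 F.
pose G := fun d => d * Nirr F d.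
have gs : forall n, 0 < n -> q ^ n = A G n.
  by move=> n n0; rewrite (gauss_sum F n0).
case: t => [|s].
  rewrite expn0 mul1n; apply: core0 => //.
  have := gs l (prime_gt0 pl); rewrite A_l // /G.
  have := gs 1 isT; rewrite A_1 /G expn1 => <-.
  lia.
set a := q ^ (2 ^ s).
have a1 : 1 < a by rewrite /a -(expn0 q) ltn_exp2l // expn_gt0.
have la : l %| a - 1 by apply: cong1X => //; lia.
have Hv : logn l (a - 1) = logn l (q - 1).
  apply: logn_lte => //; [exact: not_dvd_pow2 | by rewrite expn_gt0].
rewrite -Hv; apply: (core (c := 2 ^ s.+1)) => //; first exact: not_dvd_pow2.
  by rewrite expn_gt0.
have n0 : 0 < 2 ^ s.+1 * l by rewrite muln_gt0 expn_gt0 (prime_gt0 pl).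
have n1 : 0 < 2 ^ s * l by rewrite muln_gt0 expn_gt0 (prime_gt0 pl).
have E1 := gs _ n0; rewrite A_pow2l // -(gs _ n1) in E1.
have p2 k : 0 < 2 ^ k by rewrite expn_gt0.
have E2 := gs (2 ^ s.+1) (p2 _); rewrite A_pow2 -(gs _ (p2 _)) in E2.
have e1 : q ^ (2 ^ s.+1 * l) = a ^ (2 * l) by rewrite /a -expnM expnS mulnA (mulnC 2).
have e2 : q ^ (2 ^ s * l) = a ^ l by rewrite /a -expnM.
have e3 : q ^ (2 ^ s.+1) = a ^ 2 by rewrite /a -expnM expnS mulnC.
rewrite e1 e2 in E1; rewrite e3 -/a in E2.
move: E1 E2; rewrite /G; lia.
Qed.
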